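(* The function $\underline\Gamma(b):=\min_{0\le a\le b}\Gamma(a,b)$, $b\ge0$, is continuous and strictly decreasing, and $\underline\Gamma(b)\to-\infty$ as $b\to\infty$. For each $b>0$, the function $a\mapsto\Gamma(a,b)$ on $[0,b]$ has a unique minimizer $a(b)$. This minimizer is either $0$, or it is the unique $\hat a\in(0,b)$ with $\gamma(\hat a,b)=0$. Define $(a^*,b^* )$ as follows. If $\Gamma(0,0)=\delta-q\rho-\beta\psi_X'(0+)\le0$, set $a^*=b^*=0$. Otherwise, let $b^*>0$ be the unique root of $\underline\Gamma(b^* )=0$ and set $a^*=a(b^* )$. Then exactly one of the following holds: (i) $a^*=b^*=0$ and $\delta-q\rho-\beta\psi_X'(0+)\le0$; (ii-1) $a^*=0<b^*$, $\Gamma(0,b^* )=0$, $\beta^{-1}-Z^{(q)}(b^* )\ge0$, and $\delta-q\rho-\beta\psi_X'(0+)>0$; (ii-2) $0<a^*<b^*$, $\Gamma(a^*,b^* )=\gamma(a^*,b^* )=0$, and $\delta-q\rho-\beta\psi_X'(0+)>0$.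
   Context: Let $Y$ be a spectrally positive Lévy process (no negative jumps, not a subordinator) with Laplace exponent $\psi_Y(\theta)=\log\mathbb E[e^{-\theta Y_1}]$, $\theta\ge0$, and $\mathbb E[Y_1]=-\psi_Y'(0+)<\infty$. Fix $q>0$, $\delta>0$, $\beta\in(0,1)$, $\rho\in\mathbb R$. Let $X_t=Y_t-\delta t$, with $\psi_X(\theta)=\psi_Y(\theta)+\delta\theta$. Scale functions: $\mathbb W^{(q)}$ (resp. $W^{(q)}$) is the function $\mathbb R\to[0,\infty)$ that vanishes on $(-\infty,0)$, is continuous and strictly increasing on $[0,\infty)$, and has Laplace transform $\int_0^\infty e^{-\theta x}\mathbb W^{(q)}(x)\,dx=1/(\psi_Y(\theta)-q)$ (resp. $1/(\psi_X(\theta)-q)$) for $\theta$ large enough. Set $\mathbb Z^{(q)}(x)=1+q\int_0^x\mathbb W^{(q)}(y)\,dy$, $Z^{(q)}(x)=1+q\int_0^xW^{(q)}(y)\,dy$, $\overline Z^{(q)}(x)=\int_0^xZ^{(q)}(z)\,dz$, all with the conventions $Z^{(q)}=1$ and $\overline Z^{(q)}(x)=x$ for $x\le0$. Let $R^{(q)}(z)=\overline Z^{(q)}(z)+\psi_X'(0+)/q$ and $$\tilde r^{(q)}_c(z)=R^{(q)}(z)+\delta\int_c^z\mathbb W^{(q)}(z-y)Z^{(q)}(y)\,dy.$$ For $0\le a\le b$, define $$\Gamma(a,b)=\delta\mathbb Z^{(q)}(a)-q\rho-q\beta\,\tilde r^{(q)}_{b-a}(b),\qquad \gamma(a,b)=\beta^{-1}-Z^{(q)}(b-a).$$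 *)

(* Defs.v *)
From Stdlib Require Import Reals Lra Classical ClassicalEpsilon.
Open Scope R_scope.

(* Riemann integral of f over [a,b] (value of RiemannInt when f is
   Riemann integrable; an unspecified real otherwise). *)
Definition Rint (f : R -> R) (a b : R) : R :=
  epsilon (inhabits 0)
    (fun v => exists pr : Riemann_integrable f a b, RiemannInt pr = v).

Definition improper_int_eq (f : R -> R) (a v : R) : Prop :=
  (forall T, a <= T -> inhabited (Riemann_integrable f a T)) /\
  (forall eps, 0 < eps -> exists M, forall T, M <= T -> a <= T ->
      Rabs (Rint f a T - v) < eps).

Definition cont_on_nonneg (f : R -> R) : Prop :=
  forall x, 0 <= x -> forall eps, 0 < eps -> exists eta, 0 < eta /\
    forall y, 0 <= y -> Rabs (y - x) < eta -> Rabs (f y - f x) < eps.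

(* psi (restricted to [0,infty)) is psi_Y(theta) = log E[exp(-theta Y_1)] for a
   spectrally positive Levy process Y with finite mean which is not a
   subordinator, and dpsi0 = psi_Y'(0+) = -E[Y_1].
   Since no measure theory is available, the Levy-Khintchine form
     psi(t) = c t + s^2 t^2/2 + int_(0,infty) (e^{-tx} - 1 + t x) Pi(dx),
     int (x /\ x^2) Pi(dx) < infty,
   is encoded via Bernstein's theorem: psi(0)=0, psi continuous at 0+, smooth
   on (0,infty) with psi'' completely monotone, psi'(0+) = dpsi0 finite;
   "not a subordinator" <-> psi takes a positive value. *)
Definition spos_levy_exponent (psi : R -> R) (dpsi0 : R) : Prop :=
  psi 0 = 0 /\
  (forall eps, 0 < eps -> exists eta, 0 < eta /\
      forall t, 0 <= t < eta -> Rabs (psi t) < eps) /\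
  (exists D : nat -> R -> R,
      (forall x, 0 < x -> D 0%nat x = psi x) /\
      (forall n x, 0 < x -> derivable_pt_lim (D n) x (D (S n) x)) /\
      (forall n x, 0 < x -> 0 <= (-1) ^ n * D (n + 2)%nat x) /\
      (forall eps, 0 < eps -> exists eta, 0 < eta /\
          forall t, 0 < t < eta -> Rabs (D 1%nat t - dpsi0) < eps)) /\
  (exists th, 0 < th /\ 0 < psi th).

Definition is_scale_function (psi : R -> R) (q : R) (W : R -> R) : Prop :=
  (forall x, x < 0 -> W x = 0) /\
  cont_on_nonneg W /\
  (forall x y, 0 <= x -> x < y -> W x < W y) /\
  (exists th0, forall th, th0 < th ->
      psi th <> q /\
      improper_int_eq (fun x => exp (- th * x) * W x) 0 (/ (psi th - q))).

Definition psiX (psiY : R -> R) (delta : R) : R -> R :=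
  fun th => psiY th + delta * th.

Definition Zq (q : R) (W : R -> R) (x : R) : R :=
  if Rle_dec x 0 then 1 else 1 + q * Rint W 0 x.

Definition Zbarq (q : R) (W : R -> R) (x : R) : R :=
  if Rle_dec x 0 then x else Rint (Zq q W) 0 x.

Definition Rq (q : R) (W : R -> R) (dpsiX : R) (z : R) : R :=
  Zbarq q W z + dpsiX / q.

Definition rtilde (q delta : R) (WW W : R -> R) (dpsiX c z : R) : R :=
  Rq q W dpsiX z + delta * Rint (fun y => WW (z - y) * Zq q W y) c z.

(* Gamma(a,b); dpsiX stands for psi_X'(0+) *)
Definition Gam (q delta beta rho dpsiX : R) (WW W : R -> R) (a b : R) : R :=
  delta * Zq q WW a - q * rho - q * beta * rtilde q delta WW W dpsiX (b - a) b.

Definition gam (q beta : R) (W : R -> R) (a b : R) : R :=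
  / beta - Zq q W (b - a).

Definition is_min_value (f : R -> R) (lo hi m : R) : Prop :=
  (exists x, lo <= x <= hi /\ f x = m) /\
  (forall x, lo <= x <= hi -> m <= f x).

Definition Gunder (q delta beta rho dpsiX : R) (WW W : R -> R) (b : R) : R :=
  epsilon (inhabits 0)
    (is_min_value (fun a => Gam q delta beta rho dpsiX WW W a b) 0 b).

Definition aof (q delta beta rho dpsiX : R) (WW W : R -> R) (b : R) : R :=
  epsilon (inhabits 0)
    (fun a => 0 <= a <= b /\
       Gam q delta beta rho dpsiX WW W a b = Gunder q delta beta rho dpsiX WW W b).

Definition bstar (q delta beta rho dpsiX : R) (WW W : R -> R) : R :=
  if Rle_dec (Gam q delta beta rho dpsiX WW W 0 0) 0 then 0
  else epsilon (inhabits 0)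
         (fun b => 0 < b /\ Gunder q delta beta rho dpsiX WW W b = 0).

Definition astar (q delta beta rho dpsiX : R) (WW W : R -> R) : R :=
  if Rle_dec (Gam q delta beta rho dpsiX WW W 0 0) 0 then 0
  else aof q delta beta rho dpsiX WW W (bstar q delta beta rho dpsiX WW W).

Definition exactly_one3 (P Q S : Prop) : Prop :=
  (P \/ Q \/ S) /\ ~ (P /\ Q) /\ ~ (P /\ S) /\ ~ (Q /\ S).

(* Main.v *)
Require Import Defs.
From Stdlib Require Import Reals Lra ClassicalEpsilon Classical.
From Coquelicot Require Import Coquelicot.
Open Scope R_scope.

Lemma Rint_RInt (f : R -> R) a b : ex_RInt f a b -> Rint f a b = RInt f a b.
Proof.
  intro H. unfold Rint.
  assert (Hex: exists v, exists pr: Riemann_integrable f a b, RiemannInt pr = v).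
  { exists (RiemannInt (ex_RInt_Reals_0 _ _ _ H)); eexists; reflexivity. }
  destruct (epsilon_spec (inhabits 0) _ Hex) as [pr Hpr].
  rewrite <- Hpr. symmetry. apply RInt_Reals.
Qed.

Lemma cont_eps (f : R -> R) x :
  (forall eps, 0 < eps -> exists eta, 0 < eta /\ forall y, Rabs (y - x) < eta -> Rabs (f y - f x) < eps) ->
  continuous f x.
Proof.
  intro H. apply continuity_pt_filterlim.
  unfold continuity_pt, continue_in, limit1_in, limit_in. simpl. unfold R_dist.
  intros eps Heps. destruct (H eps Heps) as [eta [He Hc]]. exists eta. split; auto.
  intros y [_ Hy]. apply Hc. auto.
Qed.

Lemma continuous_pt (f : R -> R) x : continuous f x -> continuity_pt f x.
Proof. intro H. apply continuity_pt_filterlim. exact H. Qed.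

Lemma deriv_cont f x l : derivable_pt_lim f x l -> continuous f x.
Proof. intro H. apply (ex_derive_continuous (K:=R_AbsRing) (V:=R_NormedModule)). exists l. apply is_derive_Reals. exact H. Qed.

Lemma exRI (f : R -> R) (Hc : forall x, continuous f x) a b : ex_RInt f a b.
Proof. apply (ex_RInt_continuous (V:=R_CompleteNormedModule)). intros; apply Hc. Qed.

Lemma deriv_RInt0 (f : R -> R) (Hc : forall x, continuous f x) x :
  derivable_pt_lim (fun y => RInt f 0 y) x (f x).
Proof.
  apply is_derive_Reals. apply (is_derive_RInt f (fun y => RInt f 0 y) 0 x).
  - apply filter_forall. intro y. apply (RInt_correct (V:=R_CompleteNormedModule)). apply exRI; auto.
  - apply Hc.
Qed.

Lemma RInt_minusR (f g : R -> R) a b : ex_RInt f a b -> ex_RInt g a b ->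
  RInt (fun x => f x - g x) a b = RInt f a b - RInt g a b.
Proof. intros. exact (RInt_minus f g a b H H0). Qed.
Lemma RInt_scalR (f : R -> R) a b c: ex_RInt f a b -> RInt (fun x => c * f x) a b = c * RInt f a b.
Proof. intros. exact (RInt_scal f a b c H). Qed.
Lemma RInt_constR (c a b:R) : RInt (fun _ => c) a b = (b-a)*c.
Proof. exact (RInt_const a b c). Qed.
Lemma RInt_ChaslesR (f : R -> R) a b c : ex_RInt f a b -> ex_RInt f b c ->
  RInt f a b + RInt f b c = RInt f a c.
Proof. intros. exact (RInt_Chasles f a b c H H0). Qed.
Lemma RInt_pointR (f : R -> R) a : RInt f a a = 0.
Proof. exact (RInt_point a f). Qed.
Lemma RInt_swapR (f : R -> R) a b : ex_RInt f a b -> RInt f b a = - RInt f a b.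
Proof. intros. rewrite <- (opp_RInt_swap f a b H). reflexivity. Qed.

Lemma cmult (f g : R -> R) x : continuous f x -> continuous g x -> continuous (fun y => f y * g y) x.
Proof. intros. exact (continuous_mult f g x H H0). Qed.
Lemma cminus (f g : R -> R) x : continuous f x -> continuous g x -> continuous (fun y => f y - g y) x.
Proof. intros. exact (continuous_minus f g x H H0). Qed.
Lemma cconst (c x : R) : continuous (fun _ : R => c) x.
Proof. exact (continuous_const c x). Qed.
Lemma ccomp (f g : R -> R) x : continuous f x -> continuous g (f x) -> continuous (fun y => g (f y)) x.
Proof. intros. exact (continuous_comp f g x H H0). Qed.

Lemma mvt f f' a b : a < b -> (forall c, a <= c <= b -> derivable_pt_lim f c (f' c)) ->
  exists c, a < c < b /\ f b - f a = f' c * (b - a).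
Proof. intros. destruct (MVT_cor2 f f' a b H H0) as [c [H1 H2]]. exists c; auto. Qed.

Lemma lip f f' lo hi M : (forall x, lo <= x <= hi -> derivable_pt_lim f x (f' x)) ->
  (forall x, lo <= x <= hi -> Rabs (f' x) <= M) ->
  forall x y, lo <= x <= hi -> lo <= y <= hi -> Rabs (f x - f y) <= M * Rabs (x - y).
Proof.
  intros Hd Hb x y Hx Hy.
  destruct (Rtotal_order x y) as [h|[h|h]].
  - destruct (mvt f f' x y h) as [c [Hc E]]. intros; apply Hd; lra.
    rewrite Rabs_minus_sym, E, (Rabs_minus_sym x y), Rabs_mult.
    apply Rmult_le_compat_r. apply Rabs_pos. apply Hb; lra.
  - subst. unfold Rminus. rewrite !Rplus_opp_r, Rabs_R0. lra.
  - destruct (mvt f f' y x h) as [c [Hc E]]. intros; apply Hd; lra.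
    rewrite E, Rabs_mult.
    apply Rmult_le_compat_r. apply Rabs_pos. apply Hb; lra.
Qed.
Lemma cplus (f g : R -> R) x : continuous f x -> continuous g x -> continuous (fun y => f y + g y) x.
Proof. intros. exact (continuous_plus f g x H H0). Qed.
Lemma RInt_extR (f g : R -> R) a b : (forall x, Rmin a b < x < Rmax a b -> f x = g x) -> RInt f a b = RInt g a b.
Proof. intros. apply RInt_ext. exact H. Qed.
Lemma ex_RInt_extR (f g : R -> R) a b : (forall x, Rmin a b < x < Rmax a b -> f x = g x) -> ex_RInt f a b -> ex_RInt g a b.
Proof. intros. eapply ex_RInt_ext; eauto. Qed.
Lemma Rabs_def2b x a : Rabs x <= a -> - a <= x <= a.
Proof. intros. split_Rabs; lra. Qed.
Definition goodf (f : R -> R) := (forall x, x < 0 -> f x = 0) /\ cont_on_nonneg f /\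
  (forall x y, 0 <= x -> x < y -> f x < f y) /\ 0 <= f 0.
Definition ft (f : R -> R) x := f (Rmax x 0).

Lemma ft_cont f : cont_on_nonneg f -> forall x, continuous (ft f) x.
Proof.
  intros H x. apply cont_eps. intros eps Heps.
  destruct (H (Rmax x 0) (Rmax_r _ _) eps Heps) as [eta [He Hc]].
  exists eta; split; auto. intros y Hy. unfold ft. apply Hc. apply Rmax_r.
  unfold Rmax; destruct (Rle_dec y 0), (Rle_dec x 0); split_Rabs; lra.
Qed.

Lemma ft_eq f x : 0 <= x -> ft f x = f x.
Proof. intro. unfold ft. rewrite Rmax_left; auto. Qed.

Lemma f_mono f : goodf f -> forall x y, 0 <= x -> x <= y -> f x <= f y.
Proof. intros [_ [_ [H _]]] x y Hx Hxy. destruct (Req_dec x y). subst; lra. left; apply H; lra. Qed.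

Lemma ft_nonneg f : goodf f -> forall x, 0 <= ft f x.
Proof. intros Hg x. unfold ft. assert (H0 := Hg). destruct H0 as [_ [_ [_ H]]].
  apply Rle_trans with (f 0); auto. apply f_mono; auto; try lra. apply Rmax_r. Qed.

Lemma ft_pos f : goodf f -> forall x, 0 < x -> 0 < ft f x.
Proof. intros Hg x Hx. rewrite ft_eq by lra. assert (H0 := Hg). destruct H0 as [_ [_ [H H1]]].
  apply Rle_lt_trans with (f 0); auto. apply H; lra. Qed.

Lemma ft_mono f : goodf f -> forall x y, x <= y -> ft f x <= ft f y.
Proof. intros Hg x y H. unfold ft. apply f_mono; auto. apply Rmax_r.
  unfold Rmax; destruct (Rle_dec x 0), (Rle_dec y 0); lra. Qed.

Definition Zt (q : R) (f : R -> R) x := 1 + q * RInt (ft f) 0 x.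

Lemma Zt_deriv q f : goodf f -> forall x, derivable_pt_lim (Zt q f) x (q * ft f x).
Proof.
  intros Hg x. assert (Hc : forall x, continuous (ft f) x) by (apply ft_cont; apply Hg).
  assert (H := deriv_RInt0 _ Hc x).
  replace (q * ft f x) with (0 + q * ft f x) by ring.
  apply (derivable_pt_lim_plus (fct_cte 1) (mult_real_fct q (fun y => RInt (ft f) 0 y))).
  apply derivable_pt_lim_const. apply derivable_pt_lim_scal. exact H.
Qed.

Lemma Zt_cont q f : goodf f -> forall x, continuous (Zt q f) x.
Proof. intros Hg x. eapply deriv_cont. apply Zt_deriv; auto. Qed.

Lemma Zt_0 q f : Zt q f 0 = 1.
Proof. unfold Zt. rewrite RInt_pointR. ring. Qed.

Lemma Zt_mono q f : 0 < q -> goodf f -> forall x y, x <= y -> Zt q f x <= Zt q f y.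
Proof.
  intros Hq Hg x y H. destruct (Req_dec x y). subst; lra.
  destruct (mvt (Zt q f) (fun x => q * ft f x) x y) as [c [Hc E]]. lra.
  intros; apply Zt_deriv; auto.
  assert (0 <= q * ft f c) by (apply Rmult_le_pos; [lra| apply ft_nonneg; auto]).
  assert (0 <= q * ft f c * (y - x)) by (apply Rmult_le_pos; lra). lra.
Qed.

Lemma Zt_smono q f : 0 < q -> goodf f -> forall x y, 0 <= x -> x < y -> Zt q f x < Zt q f y.
Proof.
  intros Hq Hg x y H0 H.
  destruct (mvt (Zt q f) (fun x => q * ft f x) x y) as [c [Hc E]]. lra.
  intros; apply Zt_deriv; auto.
  assert (0 < q * ft f c) by (apply Rmult_lt_0_compat; [lra| apply ft_pos; auto; lra]).
  assert (0 < q * ft f c * (y - x)) by (apply Rmult_lt_0_compat; lra). lra.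
Qed.

Lemma Zt_ge1 q f : 0 < q -> goodf f -> forall x, 0 <= x -> 1 <= Zt q f x.
Proof. intros. rewrite <- (Zt_0 q f). apply Zt_mono; auto. Qed.

Lemma Zq_eq q f : goodf f -> forall x, 0 <= x -> Zq q f x = Zt q f x.
Proof.
  intros Hg x Hx. unfold Zq. destruct (Rle_dec x 0).
  - assert (x = 0) by lra. subst. rewrite Zt_0. auto.
  - unfold Zt. f_equal. f_equal.
    assert (Hc : forall x, continuous (ft f) x) by (apply ft_cont; apply Hg).
    assert (E : forall y, Rmin 0 x < y < Rmax 0 x -> ft f y = f y).
    { intros y Hy. rewrite Rmin_left, Rmax_right in Hy by lra. apply ft_eq; lra. }
    rewrite Rint_RInt. apply RInt_extR. intros; symmetry; apply E; auto.
    apply (ex_RInt_ext (ft f)). auto. apply exRI; auto.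
Qed.
Definition ZB q (W : R -> R) b := RInt (Zt q W) 0 b.
Definition hh q beta (WW W : R -> R) b u := ft WW u * (1 - beta * Zt q W (b - u)).
Definition HH q beta WW W a b := RInt (hh q beta WW W b) 0 a.
Definition Gf q delta beta C WW W a b := C - q*beta*ZB q W b + delta*q*HH q beta WW W a b.

Lemma hh_cont q beta WW W : goodf WW -> goodf W -> forall b x, continuous (hh q beta WW W b) x.
Proof.
  intros H1 H2 b x. unfold hh. apply cmult. apply ft_cont; apply H1.
  apply cminus. apply cconst. apply cmult. apply cconst.
  apply (ccomp (fun u => b - u) (Zt q W)). apply cminus. apply cconst. apply continuous_id.
  apply Zt_cont; auto.
Qed.

Lemma Zbarq_eq q W : goodf W -> forall b, 0 <= b -> Zbarq q W b = ZB q W b.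
Proof.
  intros Hg b Hb. unfold Zbarq, ZB. destruct (Rle_dec b 0).
  - assert (b = 0) by lra. subst. rewrite RInt_pointR. auto.
  - assert (E : forall y, Rmin 0 b < y < Rmax 0 b -> Zt q W y = Zq q W y).
    { intros y Hy. rewrite Rmin_left, Rmax_right in Hy by lra. symmetry; apply Zq_eq; auto; lra. }
    rewrite Rint_RInt. apply RInt_extR. intros; symmetry; apply E; auto.
    apply (ex_RInt_ext (Zt q W)). auto. apply exRI. apply Zt_cont; auto.
Qed.

Lemma conv_eq q WW W : goodf WW -> goodf W -> forall a b, 0 <= a <= b ->
  Rint (fun y => WW (b - y) * Zq q W y) (b - a) b = RInt (fun u => ft WW u * Zt q W (b - u)) 0 a.
Proof.
  intros H1 H2 a b Hab.
  set (g := fun y => ft WW (b - y) * Zt q W y).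
  assert (Hgc : forall x, continuous g x).
  { intro x. unfold g. apply cmult. apply (ccomp (fun u => b - u) (ft WW)).
    apply cminus. apply cconst. apply continuous_id. apply ft_cont; apply H1. apply Zt_cont; auto. }
  assert (E : forall y, Rmin (b - a) b < y < Rmax (b - a) b -> g y = WW (b - y) * Zq q W y).
  { intros y Hy. rewrite Rmin_left, Rmax_right in Hy by lra. unfold g.
    rewrite ft_eq by lra. rewrite Zq_eq; auto; lra. }
  rewrite Rint_RInt.
  2:{ apply (ex_RInt_ext g). auto. apply exRI; auto. }
  rewrite <- (RInt_ext g) by (intros; apply E; auto).
  assert (E1 := RInt_comp_lin g (-1) b 0 a (exRI _ Hgc _ _)).
  assert (E2 : RInt (fun y => scal (-1) (g (-1*y+b))) 0 a = -1 * RInt (fun y => g (-1*y+b)) 0 a).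
  { apply (RInt_scal (V:=R_CompleteNormedModule)). apply exRI. intro x.
    apply (ccomp (fun y => -1*y+b) g). apply cplus. apply cmult. apply cconst.
    apply continuous_id. apply cconst. apply Hgc. }
  replace (-1*0+b) with b in E1 by ring. replace (-1*a+b) with (b-a) in E1 by ring.
  rewrite (RInt_swapR g (b-a) b) in E1 by (apply exRI; auto).
  assert (E3 : RInt (fun y => g (-1*y+b)) 0 a = RInt (fun u => ft WW u * Zt q W (b - u)) 0 a).
  { apply RInt_extR. intros x _. unfold g. replace (b - (-1*x+b)) with x by ring.
    replace (-1*x+b) with (b-x) by ring. reflexivity. }
  assert (E4 : - RInt g (b-a) b = -1 * RInt (fun y => g (-1*y+b)) 0 a) by (rewrite <- E1; exact E2).
  rewrite <- E3. lra.
Qed.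

Lemma Gam_eq q delta beta rho dpsiX WW W : goodf WW -> goodf W -> 0 < q ->
  forall a b, 0 <= a <= b ->
  Gam q delta beta rho dpsiX WW W a b = Gf q delta beta (delta - q*rho - beta*dpsiX) WW W a b.
Proof.
  intros H1 H2 Hq a b Hab. unfold Gam, rtilde, Rq, Gf.
  rewrite Zq_eq by (auto; lra). rewrite Zbarq_eq by (auto; lra).
  replace (b - (b - a)) with a by ring.
  rewrite conv_eq by (auto; lra).
  assert (Hc1 : forall x, continuous (ft WW) x) by (apply ft_cont; apply H1).
  assert (Hc2 : forall x, continuous (fun u => ft WW u * Zt q W (b - u)) x).
  { intro x. apply cmult. apply Hc1. apply (ccomp (fun u => b - u) (Zt q W)).
    apply cminus. apply cconst. apply continuous_id. apply Zt_cont; auto. }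
  assert (E : HH q beta WW W a b = RInt (ft WW) 0 a - beta * RInt (fun u => ft WW u * Zt q W (b - u)) 0 a).
  { unfold HH. rewrite <- RInt_scalR by (apply exRI; auto).
    rewrite <- RInt_minusR. apply RInt_extR. intros; unfold hh; ring.
    apply exRI; auto. apply exRI. intro x. apply cmult. apply cconst. apply Hc2. }
  rewrite E. unfold Zt at 1. field. lra.
Qed.
Definition Hyp q delta beta WW W := goodf WW /\ goodf W /\ 0 < q /\ 0 < delta /\ 0 < beta < 1.

Lemma HH_deriv q delta beta WW W : Hyp q delta beta WW W -> forall b x,
  derivable_pt_lim (fun a => HH q beta WW W a b) x (hh q beta WW W b x).
Proof. intros [H1 [H2 _]] b x. unfold HH. apply deriv_RInt0. apply hh_cont; auto. Qed.

Lemma HH_0 q beta WW W b : HH q beta WW W 0 b = 0.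
Proof. unfold HH. apply RInt_pointR. Qed.

Lemma ZB_deriv q W : goodf W -> forall x, derivable_pt_lim (ZB q W) x (Zt q W x).
Proof. intros Hg x. unfold ZB. apply deriv_RInt0. apply Zt_cont; auto. Qed.

Lemma ZB_0 q W : ZB q W 0 = 0.
Proof. unfold ZB. apply RInt_pointR. Qed.

Lemma k_smono q delta beta WW W : Hyp q delta beta WW W -> forall b a1 a2, 0 <= a1 -> a1 < a2 -> a2 <= b ->
  1 - beta * Zt q W (b - a1) < 1 - beta * Zt q W (b - a2).
Proof.
  intros [H1 [H2 [Hq [Hd Hb]]]] b a1 a2 ? ? ?.
  assert (Zt q W (b - a2) < Zt q W (b - a1)) by (apply Zt_smono; auto; lra).
  assert (beta * Zt q W (b - a2) < beta * Zt q W (b - a1)) by (apply Rmult_lt_compat_l; lra).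
  lra.
Qed.

Lemma HH_struct q delta beta WW W : Hyp q delta beta WW W -> forall b, 0 <= b ->
  exists m, 0 <= m <= b /\ (forall a, 0 <= a <= b -> a <> m -> HH q beta WW W m b < HH q beta WW W a b) /\
  ((m = 0 /\ 0 <= 1 - beta * Zt q W b) \/ (0 < m < b /\ 1 - beta * Zt q W (b - m) = 0)).
Proof.
  intros Hy b Hb0. assert (Hy' := Hy). destruct Hy' as [H1 [H2 [Hq [Hd Hbeta]]]].
  destruct (Rle_dec 0 (1 - beta * Zt q W b)) as [Hk|Hk].
  - exists 0. split. lra. split.
    + intros a Ha Hne. rewrite HH_0.
      destruct (mvt (fun a => HH q beta WW W a b) (hh q beta WW W b) 0 a) as [c [Hc E]]. lra.
      intros; apply (HH_deriv q delta); auto.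
      simpl in E. rewrite HH_0 in E.
      enough (0 < hh q beta WW W b c * (a - 0)) by lra.
      apply Rmult_lt_0_compat; [|lra].
      unfold hh. apply Rmult_lt_0_compat. apply ft_pos; auto; lra.
      assert (1 - beta * Zt q W (b - 0) < 1 - beta * Zt q W (b - c)) by (apply (k_smono q delta beta WW W); auto; lra).
      replace (b - 0) with b in H by ring. lra.
    + left; split; auto; lra.
  - assert (Hbpos : 0 < b).
    { destruct (Req_dec b 0); [|lra]. subst. rewrite Zt_0 in Hk. lra. }
    set (k := fun a => 1 - beta * Zt q W (b - a)).
    assert (Hkc : continuity k).
    { intro x. apply continuous_pt. unfold k. apply cminus. apply cconst. apply cmult. apply cconst.
      apply (ccomp (fun u => b - u) (Zt q W)). apply cminus. apply cconst. apply continuous_id.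
      apply Zt_cont; auto. }
    destruct (IVT k 0 b Hkc Hbpos) as [m [Hm Hkm]].
    { unfold k. replace (b - 0) with b by ring. lra. }
    { unfold k. replace (b - b) with 0 by ring. rewrite Zt_0. lra. }
    assert (Hm0 : m <> 0). { intro. subst. unfold k in Hkm. replace (b - 0) with b in Hkm by ring. lra. }
    assert (Hmb : m <> b). { intro. subst. unfold k in Hkm. replace (b - b) with 0 in Hkm by ring. rewrite Zt_0 in Hkm. lra. }
    exists m. split. lra. split.
    + intros a Ha Hne. destruct (Rtotal_order a m) as [h|[h|h]]; [| contradiction |].
      * destruct (mvt (fun a => HH q beta WW W a b) (hh q beta WW W b) a m) as [c [Hc E]]. lra.
        intros; apply (HH_deriv q delta); auto.
        assert (hh q beta WW W b c < 0).
        { unfold hh. assert (k c < k m) by (unfold k; apply (k_smono q delta beta WW W); auto; lra).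
          unfold k in *. assert (0 < ft WW c) by (apply ft_pos; auto; lra).
          assert (0 < ft WW c * - (1 - beta * Zt q W (b - c))) by (apply Rmult_lt_0_compat; lra). lra. }
        assert (0 < - hh q beta WW W b c * (m - a)) by (apply Rmult_lt_0_compat; lra).
        simpl in E. lra.
      * destruct (mvt (fun a => HH q beta WW W a b) (hh q beta WW W b) m a) as [c [Hc E]]. lra.
        intros; apply (HH_deriv q delta); auto.
        assert (0 < hh q beta WW W b c).
        { unfold hh. assert (k m < k c) by (unfold k; apply (k_smono q delta beta WW W); auto; lra).
          unfold k in *. apply Rmult_lt_0_compat. apply ft_pos; auto; lra. lra. }
        assert (0 < hh q beta WW W b c * (a - m)) by (apply Rmult_lt_0_compat; lra).
        simpl in E. lra.
    + right. split. lra. exact Hkm.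
Qed.

Lemma Gf_struct q delta beta C WW W : Hyp q delta beta WW W -> forall b, 0 <= b ->
  exists m, 0 <= m <= b /\ (forall a, 0 <= a <= b -> a <> m -> Gf q delta beta C WW W m b < Gf q delta beta C WW W a b) /\
  ((m = 0 /\ 0 <= 1 - beta * Zt q W b) \/ (0 < m < b /\ 1 - beta * Zt q W (b - m) = 0)).
Proof.
  intros Hy b Hb. destruct (HH_struct q delta beta WW W Hy b Hb) as [m [Hm [Hmin Hc]]].
  exists m. split; auto. split; auto.
  intros a Ha Hne. specialize (Hmin a Ha Hne). unfold Gf.
  destruct Hy as [_ [_ [Hq [Hd _]]]].
  assert (0 < delta * q * (HH q beta WW W a b - HH q beta WW W m b)) by
    (apply Rmult_lt_0_compat; [apply Rmult_lt_0_compat|]; lra).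
  lra.
Qed.

Lemma Gf_bmono q delta beta C WW W : Hyp q delta beta WW W -> forall a b1 b2, 0 <= a -> a <= b1 -> b1 < b2 ->
  Gf q delta beta C WW W a b2 < Gf q delta beta C WW W a b1.
Proof.
  intros Hy a b1 b2 Ha Hab Hb. assert (Hy' := Hy). destruct Hy' as [H1 [H2 [Hq [Hd Hbeta]]]].
  destruct (mvt (ZB q W) (Zt q W) b1 b2) as [c [Hc E]]. lra. intros; apply ZB_deriv; auto.
  assert (1 <= Zt q W c) by (apply Zt_ge1; auto; lra).
  assert (0 < ZB q W b2 - ZB q W b1) by (rewrite E; apply Rmult_lt_0_compat; lra).
  assert (HHle : HH q beta WW W a b2 <= HH q beta WW W a b1).
  { unfold HH. apply RInt_le. auto. apply exRI; apply hh_cont; auto. apply exRI; apply hh_cont; auto.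
    intros u Hu. unfold hh. apply Rmult_le_compat_l. apply ft_nonneg; auto.
    assert (Zt q W (b1 - u) <= Zt q W (b2 - u)) by (apply Zt_mono; auto; lra).
    assert (beta * Zt q W (b1 - u) <= beta * Zt q W (b2 - u)) by (apply Rmult_le_compat_l; lra). lra. }
  unfold Gf.
  assert (0 < q * beta * (ZB q W b2 - ZB q W b1)) by (apply Rmult_lt_0_compat; [apply Rmult_lt_0_compat|]; lra).
  assert (0 <= delta * q * (HH q beta WW W a b1 - HH q beta WW W a b2)) by (apply Rmult_le_pos; [apply Rmult_le_pos|]; lra).
  lra.
Qed.

Lemma Gf_0b q delta beta C WW W : Hyp q delta beta WW W -> forall b, 0 <= b ->
  Gf q delta beta C WW W 0 b <= C - q * beta * b.
Proof.
  intros Hy b Hb. assert (Hy' := Hy). destruct Hy' as [H1 [H2 [Hq [Hd Hbeta]]]].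
  unfold Gf. rewrite HH_0.
  assert (b <= ZB q W b).
  { destruct (Req_dec b 0). subst. rewrite ZB_0. lra.
    destruct (mvt (ZB q W) (Zt q W) 0 b) as [c [Hc E]]. lra. intros; apply ZB_deriv; auto.
    rewrite ZB_0 in E. assert (1 <= Zt q W c) by (apply Zt_ge1; auto; lra).
    assert (1 * (b - 0) <= Zt q W c * (b - 0)) by (apply Rmult_le_compat_r; lra). lra. }
  assert (q * beta * b <= q * beta * ZB q W b) by (apply Rmult_le_compat_l; [apply Rmult_le_pos|]; lra).
  lra.
Qed.
Lemma Gf_lip q delta beta C WW W : Hyp q delta beta WW W -> forall L, 0 <= L ->
  exists K, 0 <= K /\
  (forall a b b', 0 <= a -> a <= b -> a <= b' -> b <= L -> b' <= L ->
     Rabs (Gf q delta beta C WW W a b - Gf q delta beta C WW W a b') <= K * Rabs (b - b')) /\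
  (forall a a' b, 0 <= a <= b -> 0 <= a' <= b -> b <= L ->
     Rabs (Gf q delta beta C WW W a b - Gf q delta beta C WW W a' b) <= K * Rabs (a - a')).
Proof.
  intros Hy L HL. assert (Hy' := Hy). destruct Hy' as [H1 [H2 [Hq [Hd Hbeta]]]].
  set (WL := ft WW L). set (wL := ft W L). set (ZL := Zt q W L).
  assert (HWL : 0 <= WL) by (apply ft_nonneg; auto).
  assert (HwL : 0 <= wL) by (apply ft_nonneg; auto).
  assert (HZL : 1 <= ZL) by (apply Zt_ge1; auto).
  set (K1 := q * ZL). set (K2 := delta * q * (L * WL * (q * wL))). set (K3 := delta * q * (WL * (1 + ZL))).
  assert (0 <= K1) by (unfold K1; apply Rmult_le_pos; lra).
  assert (0 <= K2) by (unfold K2; repeat apply Rmult_le_pos; lra).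
  assert (0 <= K3) by (unfold K3; repeat apply Rmult_le_pos; lra).
  exists (K1 + K2 + K3). split. lra. split.
  - intros a b b' Ha Hab Hab' HbL Hb'L.
    assert (LZB : Rabs (ZB q W b - ZB q W b') <= ZL * Rabs (b - b')).
    { apply (lip (ZB q W) (Zt q W) 0 L); try lra.
      intros; apply ZB_deriv; auto.
      intros x Hx. assert (1 <= Zt q W x) by (apply Zt_ge1; auto; lra).
      assert (Zt q W x <= ZL) by (apply Zt_mono; auto; lra). rewrite Rabs_pos_eq; lra. }
    assert (LZ : forall s t, 0 <= s <= L -> 0 <= t <= L -> Rabs (Zt q W s - Zt q W t) <= q * wL * Rabs (s - t)).
    { intros s t Hs Ht. apply (lip (Zt q W) (fun x => q * ft W x) 0 L); auto.
      intros; apply Zt_deriv; auto.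
      intros x Hx. rewrite Rabs_pos_eq. apply Rmult_le_compat_l. lra. apply ft_mono; auto; lra.
      apply Rmult_le_pos. lra. apply ft_nonneg; auto. }
    assert (LHH : Rabs (HH q beta WW W a b - HH q beta WW W a b') <= L * (WL * (q * wL * Rabs (b - b')))).
    { unfold HH. rewrite <- RInt_minusR by (apply exRI; apply hh_cont; auto).
      apply Rle_trans with ((a - 0) * (WL * (q * wL * Rabs (b - b')))).
      apply abs_RInt_le_const. lra. apply exRI. intro x. apply cminus; apply hh_cont; auto.
      intros u Hu. unfold hh.
      replace (ft WW u * (1 - beta * Zt q W (b - u)) - ft WW u * (1 - beta * Zt q W (b' - u)))
        with (ft WW u * (beta * (Zt q W (b' - u) - Zt q W (b - u)))) by ring.
      rewrite Rabs_mult. apply Rmult_le_compat. apply Rabs_pos. apply Rabs_pos.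
      rewrite Rabs_pos_eq by (apply ft_nonneg; auto). apply ft_mono; auto; lra.
      rewrite Rabs_mult, Rabs_pos_eq by lra.
      apply Rle_trans with (1 * Rabs (Zt q W (b' - u) - Zt q W (b - u))).
      apply Rmult_le_compat_r. apply Rabs_pos. lra. rewrite Rmult_1_l.
      rewrite (Rabs_minus_sym b b'). replace (b' - b) with ((b' - u) - (b - u)) by ring.
      apply LZ; lra.
      apply Rmult_le_compat_r. repeat apply Rmult_le_pos; try lra. apply Rabs_pos. lra. }
    unfold Gf.
    replace (C - q * beta * ZB q W b + delta * q * HH q beta WW W a b -
      (C - q * beta * ZB q W b' + delta * q * HH q beta WW W a b'))
      with ((- (q * beta)) * (ZB q W b - ZB q W b') + (delta * q) * (HH q beta WW W a b - HH q beta WW W a b')) by ring.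
    eapply Rle_trans. apply Rabs_triang. rewrite !Rabs_mult.
    rewrite Rabs_Ropp, !Rabs_pos_eq by (try apply Rmult_le_pos; lra).
    rewrite (Rabs_pos_eq q), (Rabs_pos_eq delta) by lra.
    assert (q * beta * Rabs (ZB q W b - ZB q W b') <= K1 * Rabs (b - b')).
    { unfold K1. apply Rle_trans with (q * 1 * (ZL * Rabs (b - b'))).
      apply Rmult_le_compat. apply Rmult_le_pos; lra. apply Rabs_pos. apply Rmult_le_compat_l; lra. auto.
      right; ring. }
    assert (delta * q * Rabs (HH q beta WW W a b - HH q beta WW W a b') <= K2 * Rabs (b - b')).
    { unfold K2. apply Rle_trans with (delta * q * (L * (WL * (q * wL * Rabs (b - b'))))).
      apply Rmult_le_compat_l. apply Rmult_le_pos; lra. auto. right; ring. }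
    assert (0 <= K3 * Rabs (b - b')) by (apply Rmult_le_pos; auto; apply Rabs_pos).
    lra.
  - intros a a' b Ha Ha' HbL.
    assert (LH : Rabs (HH q beta WW W a b - HH q beta WW W a' b) <= (WL * (1 + ZL)) * Rabs (a - a')).
    { apply (lip (fun a => HH q beta WW W a b) (hh q beta WW W b) 0 b); auto.
      intros; apply (HH_deriv q delta); auto.
      intros x Hx. unfold hh. rewrite Rabs_mult. apply Rmult_le_compat. apply Rabs_pos. apply Rabs_pos.
      rewrite Rabs_pos_eq by (apply ft_nonneg; auto). apply ft_mono; auto; lra.
      assert (1 <= Zt q W (b - x)) by (apply Zt_ge1; auto; lra).
      assert (Zt q W (b - x) <= ZL) by (apply Zt_mono; auto; lra).
      assert (beta * Zt q W (b - x) <= 1 * ZL) by (apply Rmult_le_compat; lra).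
      assert (0 <= beta * Zt q W (b - x)) by (apply Rmult_le_pos; lra).
      split_Rabs; lra. }
    unfold Gf.
    replace (C - q * beta * ZB q W b + delta * q * HH q beta WW W a b -
      (C - q * beta * ZB q W b + delta * q * HH q beta WW W a' b))
      with ((delta * q) * (HH q beta WW W a b - HH q beta WW W a' b)) by ring.
    rewrite Rabs_mult, Rabs_pos_eq by (apply Rmult_le_pos; lra).
    assert (delta * q * Rabs (HH q beta WW W a b - HH q beta WW W a' b) <= K3 * Rabs (a - a')).
    { unfold K3. apply Rle_trans with (delta * q * (WL * (1 + ZL) * Rabs (a - a'))).
      apply Rmult_le_compat_l. apply Rmult_le_pos; lra. auto. right; ring. }
    assert (0 <= (K1 + K2) * Rabs (a - a')) by (apply Rmult_le_pos; [lra| apply Rabs_pos]).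
    lra.
Qed.
Lemma psi_large psi d : spos_levy_exponent psi d -> forall q, exists th1, 0 < th1 /\ forall th, th1 <= th -> q < psi th.
Proof.
  intros [H0 [Hc [[D [HD0 [HDd [HD2 _]]]] [th [Hth Hpos]]]]] q.
  destruct (Hc (psi th / 2)) as [eta [Heta Hc0]]. lra.
  set (t := Rmin (eta/2) (th/2)).
  assert (Ht : 0 < t /\ t < eta /\ t < th).
  { unfold t, Rmin. destruct (Rle_dec (eta/2) (th/2)); lra. }
  assert (Hpt : Rabs (psi t) < psi th / 2) by (apply Hc0; lra).
  destruct (mvt (D 0%nat) (D 1%nat) t th) as [xi [Hxi E]]. lra.
  intros c Hc1. apply HDd. lra.
  rewrite !HD0 in E by lra.
  assert (Hs : 0 < D 1%nat xi).
  { destruct (Rlt_le_dec 0 (D 1%nat xi)); auto.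
    assert (D 1%nat xi * (th - t) <= 0) by (apply Rmult_le_0_r; lra).
    apply Rabs_def2 in Hpt. lra. }
  set (s := D 1%nat xi) in *.
  assert (Hmono : forall x, xi <= x -> s <= D 1%nat x).
  { intros x Hx. destruct (Req_dec x xi). subst; unfold s; lra.
    destruct (mvt (D 1%nat) (D 2%nat) xi x) as [z [Hz E2]]. lra.
    intros c Hc1. apply HDd. lra.
    assert (H2 := HD2 0%nat z ltac:(lra)). simpl in H2.
    assert (0 <= D 2%nat z * (x - xi)) by (apply Rmult_le_pos; lra). unfold s; lra. }
  exists (th + Rabs q / s + 1). split.
  { assert (0 <= Rabs q / s) by (apply Rmult_le_pos; [apply Rabs_pos| left; apply Rinv_0_lt_compat; lra]). lra. }
  intros th' Hth'.
  assert (0 <= Rabs q / s) by (apply Rmult_le_pos; [apply Rabs_pos| left; apply Rinv_0_lt_compat; lra]).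
  destruct (mvt (D 0%nat) (D 1%nat) th th') as [z [Hz E3]]. lra.
  intros c Hc1. apply HDd. lra.
  rewrite !HD0 in E3 by lra.
  assert (s <= D 1%nat z) by (apply Hmono; lra).
  assert (s * (th' - th) <= D 1%nat z * (th' - th)) by (apply Rmult_le_compat_r; lra).
  assert (H4 : s * (Rabs q / s + 1) <= s * (th' - th)) by (apply Rmult_le_compat_l; lra).
  replace (s * (Rabs q / s + 1)) with (Rabs q + s) in H4 by (field; lra).
  assert (q <= Rabs q) by apply RRle_abs. lra.
Qed.

Lemma exp_le x y : x <= y -> exp x <= exp y.
Proof. intros. destruct (Req_dec x y). subst; lra. left; apply exp_increasing; lra. Qed.

Lemma cexp (t x : R) : continuous (fun y => exp (t * y)) x.
Proof.
  apply (ccomp (fun y => t * y) exp). apply cmult. apply cconst. apply continuous_id.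
  eapply deriv_cont. apply derivable_pt_lim_exp.
Qed.

Lemma RInt_exp t a b : 0 < t -> RInt (fun x => exp (- t * x)) a b = (exp (- t * a) - exp (- t * b)) / t.
Proof.
  intros Ht.
  assert (H := is_RInt_derive (V:=R_CompleteNormedModule) (fun x => - exp (- t * x) / t) (fun x => exp (- t * x)) a b).
  assert (H1 : forall x, Rmin a b <= x <= Rmax a b ->
    is_derive (fun x0 : R => - exp (- t * x0) / t) x ((fun x0 : R => exp (- t * x0)) x)).
  { intros x _. auto_derive. auto. field. lra. }
  assert (H2 : forall x, Rmin a b <= x <= Rmax a b -> continuous (fun x0 : R => exp (- t * x0)) x).
  { intros x _. apply cexp. }
  rewrite (is_RInt_unique _ _ _ _ (H H1 H2)).
  change (- exp (- t * b) / t - - exp (- t * a) / t = (exp (- t * a) - exp (- t * b)) / t). field. lra.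
Qed.
Ltac solve_cont H := repeat (first [apply cexp | apply cconst | apply continuous_id | apply H | apply cminus | apply cplus | apply cmult]).

Lemma W0_nonneg psi q W : 0 < q -> is_scale_function psi q W ->
  (exists th1, forall th, th1 <= th -> q < psi th) -> 0 <= W 0.
Proof.
  intros Hq [Hneg [Hcont [Hinc [th0 HL]]]] [th1 Hth1].
  apply Rnot_lt_le; intro HW0.
  assert (Hwc : forall x, continuous (ft W) x) by (apply ft_cont; auto).
  destruct (Hcont 0 (Rle_refl 0) (- W 0 / 2)) as [eta [Heta Hc0]]. lra.
  set (e := eta / 2).
  assert (He : 0 < e) by (unfold e; lra).
  assert (HWe : W e < W 0 / 2).
  { assert (Rabs (W e - W 0) < - W 0 / 2) by (apply Hc0; [lra| rewrite Rminus_0_r, Rabs_pos_eq; unfold e; lra]).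
    apply Rabs_def2 in H. lra. }
  set (Wm := W e) in *.
  assert (HWle : forall x, 0 <= x <= e -> W x <= Wm).
  { intros x Hx. destruct (Req_dec x e). subst; unfold Wm; lra. left; apply Hinc; lra. }
  set (fe := fun th x => exp (- th * x) * ft W x).
  assert (Hfec : forall th x, continuous (fe th) x).
  { intros th x. unfold fe. apply cmult. apply cexp. apply Hwc. }
  assert (HPQ : forall th T, 0 <= T -> Rint (fun x => exp (- th * x) * W x) 0 T = RInt (fe th) 0 T).
  { intros th T HT.
    assert (E : forall x, Rmin 0 T < x < Rmax 0 T -> fe th x = exp (- th * x) * W x).
    { intros x Hx. rewrite Rmin_left, Rmax_right in Hx by lra. unfold fe. rewrite ft_eq by lra. auto. }
    rewrite Rint_RInt. apply RInt_extR. intros; symmetry; apply E; auto.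
    apply (ex_RInt_extR (fe th)). auto. apply exRI; auto. }
  set (t1 := Rmax th0 0 + 1).
  assert (Ht1 : th0 < t1 /\ 0 < t1) by (unfold t1, Rmax; destruct (Rle_dec th0 0); lra).
  destruct (HL t1 ltac:(lra)) as [_ [_ Hconv1]].
  set (v1 := / (psi t1 - q)) in *.
  destruct (Hconv1 1 ltac:(lra)) as [M1 HM1].
  set (Q1e := RInt (fe t1) 0 e).
  set (K := Rabs v1 + 1 + Rabs Q1e + (- W 0) / t1).
  assert (HK : 0 < K).
  { assert (0 < (- W 0) / t1) by (apply Rdiv_lt_0_compat; lra).
    assert (0 <= Rabs v1) by apply Rabs_pos. assert (0 <= Rabs Q1e) by apply Rabs_pos. unfold K; lra. }
  set (U := - (exp (-1) * Wm)).
  assert (HU : 0 < U).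
  { unfold U. assert (0 < exp (-1)) by apply exp_pos.
    assert (0 < exp (-1) * - Wm) by (apply Rmult_lt_0_compat; lra). lra. }
  set (A := 8 * exp (t1 * e) * K / (U * (e * e))).
  set (th := Rmax (Rmax t1 th1) (Rmax (/ e) A) + 1).
  assert (Hth : t1 < th /\ th1 < th /\ / e < th /\ A < th).
  { unfold th.
    assert (H1 := Rmax_l (Rmax t1 th1) (Rmax (/ e) A)). assert (H2 := Rmax_r (Rmax t1 th1) (Rmax (/ e) A)).
    assert (H3 := Rmax_l t1 th1). assert (H4 := Rmax_r t1 th1). assert (H5 := Rmax_l (/ e) A). assert (H6 := Rmax_r (/ e) A).
    lra. }
  assert (Hthpos : 0 < th) by lra.
  destruct (HL th ltac:(lra)) as [_ [_ Hconv]].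
  assert (Hpsi : q < psi th) by (apply Hth1; lra).
  set (v := / (psi th - q)) in *.
  assert (Hv : 0 < v) by (unfold v; apply Rinv_0_lt_compat; lra).
  set (N := exp (-1) * Wm / th).
  assert (HN : N = - U / th) by (unfold N, U; field; lra).
  assert (HNneg : N < 0) by (rewrite HN; unfold Rdiv; rewrite Ropp_mult_distr_l_reverse;
     assert (0 < U * / th) by (apply Rmult_lt_0_compat; [lra| apply Rinv_0_lt_compat; lra]); lra).
  destruct (Hconv (- N / 2) ltac:(lra)) as [Mt HMt].
  set (T := Rmax (Rmax M1 Mt) e + 1).
  assert (HT : M1 <= T /\ Mt <= T /\ e < T).
  { unfold T. assert (H1 := Rmax_l (Rmax M1 Mt) e). assert (H2 := Rmax_r (Rmax M1 Mt) e).
    assert (H3 := Rmax_l M1 Mt). assert (H4 := Rmax_r M1 Mt). lra. }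
  specialize (HMt T ltac:(lra) ltac:(lra)). specialize (HM1 T ltac:(lra) ltac:(lra)).
  rewrite HPQ in HMt, HM1 by lra.
  assert (Hinvth : 0 < / th < e).
  { split. apply Rinv_0_lt_compat; lra.
    replace e with (/ / e) by (field; lra). apply Rinv_lt_contravar. apply Rmult_lt_0_compat.
    apply Rinv_0_lt_compat; lra. lra. lra. }
  assert (Ia : RInt (fe th) 0 (/ th) <= N).
  { apply Rle_trans with (RInt (fun _ => exp (-1) * Wm) 0 (/ th)).
    apply RInt_le. lra. apply exRI; auto. apply exRI; intro; apply cconst.
    intros x Hx. unfold fe. rewrite ft_eq by lra.
    assert (Hex : exp (-1) <= exp (- th * x)).
    { apply exp_le. assert (th * x < th * / th) by (apply Rmult_lt_compat_l; lra).
      rewrite Rinv_r in H by lra. lra. }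
    assert (W x <= Wm) by (apply HWle; lra).
    assert (exp (- th * x) * W x <= exp (- th * x) * Wm) by (apply Rmult_le_compat_l; [left; apply exp_pos| lra]).
    assert (exp (- th * x) * Wm <= exp (-1) * Wm).
    { rewrite (Rmult_comm (exp (- th * x))), (Rmult_comm (exp (-1))). apply Rmult_le_compat_neg_l; lra. }
    lra.
    rewrite RInt_constR. unfold N. right; field. lra. }
  assert (Ib : RInt (fe th) (/ th) e <= 0).
  { apply Rle_trans with (RInt (fun _ => 0) (/ th) e).
    apply RInt_le. lra. apply exRI; auto. apply exRI; intro; apply cconst.
    intros x Hx. unfold fe. rewrite ft_eq by lra.
    assert (W x <= Wm) by (apply HWle; lra).
    assert (0 < exp (- th * x)) by apply exp_pos.
    assert (exp (- th * x) * - W x >= 0) by (apply Rle_ge, Rmult_le_pos; lra). lra.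
    rewrite RInt_constR. right; ring. }
  set (c0 := exp (- (th - t1) * e)).
  assert (Hc0pos : 0 < c0) by apply exp_pos.
  assert (Ic : RInt (fe th) e T <= c0 * (RInt (fe t1) e T - W 0 * RInt (fun x => exp (- t1 * x)) e T)).
  { rewrite <- RInt_scalR. rewrite <- RInt_minusR. rewrite <- RInt_scalR.
    apply RInt_le. lra. apply exRI; auto.
    apply exRI; intro; solve_cont Hfec.
    intros x Hx. unfold fe. rewrite ft_eq by lra.
    assert (Ea : exp (- th * x) = exp (- (th - t1) * x) * exp (- t1 * x)) by (rewrite <- exp_plus; f_equal; ring).
    assert (Hb : 0 < exp (- t1 * x)) by apply exp_pos.
    assert (Ha1 : 0 < exp (- (th - t1) * x)) by apply exp_pos.
    assert (Ha2 : exp (- (th - t1) * x) <= c0) by (unfold c0; apply exp_le; apply Rmult_le_compat_neg_l; lra).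
    assert (HWx : W 0 < W x) by (apply Hinc; lra).
    rewrite Ea.
    replace (c0 * (exp (- t1 * x) * W x - W 0 * exp (- t1 * x))) with (c0 * exp (- t1 * x) * (W x - W 0)) by ring.
    destruct (Rle_dec 0 (W x)).
    + apply Rle_trans with (c0 * exp (- t1 * x) * W x).
      apply Rmult_le_compat_r. lra. apply Rmult_le_compat_r; lra.
      apply Rmult_le_compat_l. apply Rmult_le_pos; lra. lra.
    + assert (0 < exp (- (th - t1) * x) * exp (- t1 * x)) by (apply Rmult_lt_0_compat; lra).
      assert (0 < exp (- (th - t1) * x) * exp (- t1 * x) * - W x) by (apply Rmult_lt_0_compat; lra).
      assert (0 <= c0 * exp (- t1 * x) * (W x - W 0)) by (apply Rmult_le_pos; [apply Rmult_le_pos|]; lra).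
      lra.
    all: apply exRI; intro; solve_cont Hfec. }
  assert (Iexp : RInt (fun x => exp (- t1 * x)) e T <= / t1).
  { rewrite RInt_exp by lra.
    assert (exp (- t1 * e) <= 1) by (rewrite <- exp_0; apply exp_le; assert (0 < t1 * e) by (apply Rmult_lt_0_compat; lra); lra).
    assert (0 < exp (- t1 * T)) by apply exp_pos.
    unfold Rdiv. apply Rle_trans with (1 * / t1). apply Rmult_le_compat_r. left; apply Rinv_0_lt_compat; lra. lra. lra. }
  assert (Ich : RInt (fe t1) e T = RInt (fe t1) 0 T - Q1e).
  { assert (E := RInt_ChaslesR (fe t1) 0 e T (exRI _ (Hfec t1) _ _) (exRI _ (Hfec t1) _ _)). unfold Q1e. lra. }
  assert (Ibound : RInt (fe t1) e T - W 0 * RInt (fun x => exp (- t1 * x)) e T <= K).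
  { rewrite Ich. apply Rabs_def2 in HM1.
    assert (v1 <= Rabs v1) by apply RRle_abs. assert (- Q1e <= Rabs Q1e) by (rewrite <- Rabs_Ropp; apply RRle_abs).
    assert (- W 0 * RInt (fun x => exp (- t1 * x)) e T <= - W 0 * / t1) by (apply Rmult_le_compat_l; lra).
    unfold K. unfold Rdiv. lra. }
  assert (Id : c0 * K <= - N / 2).
  { set (X := exp (th * e)).
    assert (HX : th * th * (e * e) / 4 <= X).
    { unfold X. replace (th * e) with (th * e / 2 + th * e / 2) by field.
      rewrite exp_plus. assert (0 < th * e) by (apply Rmult_lt_0_compat; lra).
      assert (th * e / 2 < exp (th * e / 2)) by (assert (1 + th * e / 2 < exp (th * e / 2)) by (apply exp_ineq1; lra); lra).
      assert (th * e / 2 * (th * e / 2) <= exp (th * e / 2) * exp (th * e / 2)) by (apply Rmult_le_compat; lra).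
      replace (th * th * (e * e) / 4) with (th * e / 2 * (th * e / 2)) by field. lra. }
    assert (HXpos : 0 < X) by apply exp_pos.
    assert (Ec0 : c0 = exp (t1 * e) / X) by (unfold c0, X; unfold Rdiv; rewrite <- exp_Ropp, <- exp_plus; f_equal; ring).
    assert (HA : U * (e * e) * A = 8 * exp (t1 * e) * K).
    { unfold A. field. split; lra. }
    assert (HAth : U * (e * e) * A <= U * (e * e) * th) by (apply Rmult_le_compat_l; [apply Rmult_le_pos; [lra| apply Rmult_le_pos; lra] | lra]).
    rewrite Ec0, HN.
    assert (He1 : 0 < exp (t1 * e)) by apply exp_pos.
    replace (- (- U / th) / 2) with (U / (2 * th)) by (field; lra).
    apply (Rmult_le_reg_r (2 * th * X)). apply Rmult_lt_0_compat; lra.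
    replace (exp (t1 * e) / X * K * (2 * th * X)) with (2 * th * (exp (t1 * e) * K)) by (field; lra).
    replace (U / (2 * th) * (2 * th * X)) with (U * X) by (field; lra).
    assert (U * (th * th * (e * e) / 4) <= U * X) by (apply Rmult_le_compat_l; lra).
    assert (th * (8 * exp (t1 * e) * K) <= th * (U * (e * e) * th)) by (apply Rmult_le_compat_l; lra).
    replace (U * (th * th * (e * e) / 4)) with (th * (U * (e * e) * th) / 4) in H by field.
    lra. }
  assert (Itot : RInt (fe th) 0 T <= N / 2).
  { rewrite <- (RInt_ChaslesR (fe th) 0 (/ th) T) by (apply exRI; auto).
    rewrite <- (RInt_ChaslesR (fe th) (/ th) e T) by (apply exRI; auto).
    assert (c0 * (RInt (fe t1) e T - W 0 * RInt (fun x => exp (- t1 * x)) e T) <= c0 * K) by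
      (apply Rmult_le_compat_l; lra).
    lra. }
  apply Rabs_def2 in HMt. lra.
Qed.
Lemma scale_good psi q W : 0 < q -> is_scale_function psi q W ->
  (exists th1, forall th, th1 <= th -> q < psi th) -> goodf W.
Proof.
  intros Hq HS Hl. assert (H0 := W0_nonneg psi q W Hq HS Hl).
  destruct HS as [Hneg [Hcont [Hinc _]]]. repeat split; auto.
Qed.

Lemma Gunder_spec q delta beta rho dpsiX WW W : goodf WW -> goodf W -> 0 < q ->
  forall b m, 0 <= m <= b ->
  (forall a, 0 <= a <= b -> a <> m ->
     Gf q delta beta (delta - q*rho - beta*dpsiX) WW W m b < Gf q delta beta (delta - q*rho - beta*dpsiX) WW W a b) ->
  Gunder q delta beta rho dpsiX WW W b = Gf q delta beta (delta - q*rho - beta*dpsiX) WW W m b /\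
  is_min_value (fun a => Gam q delta beta rho dpsiX WW W a b) 0 b
     (Gf q delta beta (delta - q*rho - beta*dpsiX) WW W m b).
Proof.
  intros H1 H2 Hq b m Hm Hmin.
  set (C := delta - q*rho - beta*dpsiX) in *.
  assert (HG : forall a, 0 <= a <= b -> Gam q delta beta rho dpsiX WW W a b = Gf q delta beta C WW W a b)
    by (intros; apply Gam_eq; auto).
  assert (Hmv : is_min_value (fun a => Gam q delta beta rho dpsiX WW W a b) 0 b (Gf q delta beta C WW W m b)).
  { split. exists m. split; auto. intros x Hx. rewrite HG by auto.
    destruct (Req_dec x m). subst; lra. left; apply Hmin; auto. }
  split; auto.
  unfold Gunder.
  assert (Hs := epsilon_spec (inhabits 0) _ (ex_intro _ _ Hmv)).
  set (v := epsilon _ _) in *.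
  destruct Hs as [[x [Hx Ex]] Hle].
  assert (v <= Gf q delta beta C WW W m b) by (rewrite <- HG by auto; apply Hle; auto).
  simpl in Ex. rewrite HG in Ex by auto.
  assert (Gf q delta beta C WW W m b <= v).
  { rewrite <- Ex. destruct (Req_dec x m). subst; lra. left; apply Hmin; auto. }
  lra.
Qed.
Lemma Gu_struct q delta beta rho dpsiX WW W : Hyp q delta beta WW W -> forall b, 0 <= b ->
  exists m, 0 <= m <= b /\
  Gunder q delta beta rho dpsiX WW W b = Gf q delta beta (delta - q*rho - beta*dpsiX) WW W m b /\
  (forall a, 0 <= a <= b -> a <> m ->
     Gf q delta beta (delta - q*rho - beta*dpsiX) WW W m b < Gf q delta beta (delta - q*rho - beta*dpsiX) WW W a b) /\
  ((m = 0 /\ 0 <= 1 - beta * Zt q W b) \/ (0 < m < b /\ 1 - beta * Zt q W (b - m) = 0)).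
Proof.
  intros Hy b Hb. destruct (Gf_struct q delta beta (delta - q*rho - beta*dpsiX) WW W Hy b Hb) as [m [Hm [Hmin Hc]]].
  exists m. split; auto. split; auto.
  destruct Hy as [H1 [H2 [Hq _]]]. apply (Gunder_spec q delta beta rho dpsiX WW W H1 H2 Hq b m Hm Hmin).
Qed.

Lemma Gu_le q delta beta rho dpsiX WW W : Hyp q delta beta WW W -> forall b a, 0 <= a <= b ->
  Gunder q delta beta rho dpsiX WW W b <= Gf q delta beta (delta - q*rho - beta*dpsiX) WW W a b.
Proof.
  intros Hy b a Ha. destruct (Gu_struct q delta beta rho dpsiX WW W Hy b ltac:(lra)) as [m [Hm [E [Hmin _]]]].
  rewrite E. destruct (Req_dec a m). subst; lra. left; apply Hmin; auto.
Qed.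

Lemma Gu_lip q delta beta rho dpsiX WW W : Hyp q delta beta WW W -> forall L, 0 <= L ->
  exists K, 0 <= K /\ forall s t, 0 <= s <= L -> 0 <= t <= L ->
  Rabs (Gunder q delta beta rho dpsiX WW W s - Gunder q delta beta rho dpsiX WW W t) <= K * Rabs (s - t).
Proof.
  intros Hy L HL.
  destruct (Gf_lip q delta beta (delta - q*rho - beta*dpsiX) WW W Hy L HL) as [K [HK [Lb La]]].
  assert (Half : forall s t, 0 <= s <= L -> 0 <= t <= L ->
    Gunder q delta beta rho dpsiX WW W s <= Gunder q delta beta rho dpsiX WW W t + 2 * K * Rabs (s - t)).
  { intros s t Hs Ht.
    destruct (Gu_struct q delta beta rho dpsiX WW W Hy t ltac:(lra)) as [m [Hm [E _]]].
    set (a' := Rmin m s).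
    assert (Ha' : 0 <= a' /\ a' <= s /\ a' <= m).
    { unfold a', Rmin. destruct (Rle_dec m s); lra. }
    assert (Hd : Rabs (a' - m) <= Rabs (s - t)).
    { unfold a', Rmin. destruct (Rle_dec m s). unfold Rminus; rewrite Rplus_opp_r, Rabs_R0; apply Rabs_pos.
      rewrite Rabs_left1 by lra. split_Rabs; lra. }
    assert (X1 := Gu_le q delta beta rho dpsiX WW W Hy s a' ltac:(lra)).
    assert (X2 := Lb a' s t ltac:(lra) ltac:(lra) ltac:(lra) ltac:(lra) ltac:(lra)).
    assert (X3 := La a' m t ltac:(lra) ltac:(lra) ltac:(lra)).
    rewrite E.
    assert (K * Rabs (a' - m) <= K * Rabs (s - t)) by (apply Rmult_le_compat_l; auto).
    apply Rabs_def2b in X2. apply Rabs_def2b in X3. lra. }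
  exists (2 * K). split. lra. intros s t Hs Ht.
  assert (A1 := Half s t Hs Ht). assert (A2 := Half t s Ht Hs). rewrite Rabs_minus_sym in A2.
  apply Rabs_le. lra.
Qed.
Theorem mainTheorem3
  (psiY : R -> R) (dpsiY q delta beta rho : R) (WW W : R -> R)
  (HY : spos_levy_exponent psiY dpsiY)
  (Hq : 0 < q) (Hdelta : 0 < delta) (Hbeta : 0 < beta < 1)
  (HWW : is_scale_function psiY q WW)
  (HW : is_scale_function (psiX psiY delta) q W) :
  let dpsiX := dpsiY + delta in
  let G := Gam q delta beta rho dpsiX WW W in
  let g := gam q beta W in
  let Gu := Gunder q delta beta rho dpsiX WW W in
  let a_s := astar q delta beta rho dpsiX WW W in
  let b_s := bstar q delta beta rho dpsiX WW W in
  (* underline Gamma is well defined (the minimum is attained) *)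
  (forall b, 0 <= b -> is_min_value (fun a => G a b) 0 b (Gu b)) /\
  (* continuous, strictly decreasing, tends to -infty *)
  cont_on_nonneg Gu /\
  (forall b1 b2, 0 <= b1 -> b1 < b2 -> Gu b2 < Gu b1) /\
  (forall M, exists B, forall b, B <= b -> Gu b < M) /\
  (* unique minimizer, either 0 or the unique zero of gamma(.,b) in (0,b) *)
  (forall b, 0 < b ->
     exists a, (0 <= a <= b /\ G a b = Gu b) /\
       (forall a', 0 <= a' <= b -> G a' b = Gu b -> a' = a) /\
       (a = 0 \/
        (0 < a < b /\ g a b = 0 /\
         forall a', 0 < a' < b -> g a' b = 0 -> a' = a))) /\
  (* Gamma(0,0) = delta - q rho - beta psi_X'(0+) *)
  G 0 0 = delta - q * rho - beta * dpsiX /\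
  (* b^* well defined when Gamma(0,0) > 0 *)
  (0 < G 0 0 -> exists b, (0 < b /\ Gu b = 0) /\
                  forall b', 0 < b' -> Gu b' = 0 -> b' = b) /\
  exactly_one3
    (a_s = 0 /\ b_s = 0 /\ delta - q * rho - beta * dpsiX <= 0)
    (a_s = 0 /\ 0 < b_s /\ G 0 b_s = 0 /\ / beta - Zq q W b_s >= 0 /\
     delta - q * rho - beta * dpsiX > 0)
    (0 < a_s /\ a_s < b_s /\ G a_s b_s = 0 /\ g a_s b_s = 0 /\
     delta - q * rho - beta * dpsiX > 0).
Proof.
  intros dpsiX G g Gu a_s b_s.
  destruct (psi_large psiY dpsiY HY q) as [th1 [Hth1 Hl]].
  assert (HgWW : goodf WW) by (apply (scale_good psiY q WW Hq HWW); exists th1; auto).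
  assert (HgW : goodf W).
  { apply (scale_good (psiX psiY delta) q W Hq HW). exists th1. intros th Hth. unfold psiX.
    assert (q < psiY th) by auto. assert (0 < delta * th) by (apply Rmult_lt_0_compat; lra). lra. }
  assert (Hy : Hyp q delta beta WW W) by exact (conj HgWW (conj HgW (conj Hq (conj Hdelta Hbeta)))).
  set (C := delta - q * rho - beta * dpsiX).
  set (F := Gf q delta beta C WW W).
  assert (HG : forall a b, 0 <= a <= b -> G a b = F a b) by (intros; apply Gam_eq; auto).
  assert (Hst : forall b, 0 <= b -> exists m, 0 <= m <= b /\ Gu b = F m b /\
     (forall a, 0 <= a <= b -> a <> m -> F m b < F a b) /\
     ((m = 0 /\ 0 <= 1 - beta * Zt q W b) \/ (0 < m < b /\ 1 - beta * Zt q W (b - m) = 0)))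
    by (intros; apply Gu_struct; auto).
  assert (Hle : forall b a, 0 <= a <= b -> Gu b <= F a b) by (intros; apply Gu_le; auto).
  assert (HF00 : F 0 0 = C).
  { unfold F, Gf. rewrite ZB_0, HH_0. ring. }
  assert (HG00 : G 0 0 = C) by (rewrite HG by lra; auto).
  assert (HGu0 : Gu 0 = C).
  { destruct (Hst 0 (Rle_refl 0)) as [m [Hm [E _]]]. assert (m = 0) by lra. subst. rewrite E; auto. }
  assert (Hdec : forall b1 b2, 0 <= b1 -> b1 < b2 -> Gu b2 < Gu b1).
  { intros b1 b2 Hb1 Hb12. destruct (Hst b1 Hb1) as [m [Hm [E _]]].
    assert (Gu b2 <= F m b2) by (apply Hle; lra).
    assert (F m b2 < F m b1) by (apply (Gf_bmono q delta beta C WW W Hy); lra). lra. }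
  assert (Hlim : forall b, 0 <= b -> Gu b <= C - q * beta * b).
  { intros b Hb. apply Rle_trans with (F 0 b). apply Hle; lra. apply (Gf_0b q delta beta C WW W Hy); auto. }
  assert (Hlip := Gu_lip q delta beta rho dpsiX WW W Hy).
  assert (Hcont : cont_on_nonneg Gu).
  { intros x Hx eps Heps. destruct (Hlip (x + 1) ltac:(lra)) as [K [HK HKl]].
    exists (Rmin 1 (eps / (K + 1))). split.
    { apply Rmin_pos. lra. apply Rdiv_lt_0_compat; lra. }
    intros y Hy0 Hyx.
    assert (H1 := Rmin_l 1 (eps / (K + 1))). assert (H2 := Rmin_r 1 (eps / (K + 1))).
    apply Rle_lt_trans with (K * Rabs (y - x)). apply HKl; split_Rabs; lra.
    apply Rle_lt_trans with (K * (eps / (K + 1))).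
    apply Rmult_le_compat_l; lra.
    apply Rlt_le_trans with ((K + 1) * (eps / (K + 1))).
    apply Rmult_lt_compat_r. apply Rdiv_lt_0_compat; lra. lra. right; field; lra. }
  assert (Hqb : 0 < q * beta) by (apply Rmult_lt_0_compat; lra).
  assert (Hbstar : 0 < G 0 0 -> exists b, (0 < b /\ Gu b = 0) /\ forall b', 0 < b' -> Gu b' = 0 -> b' = b).
  { intro HC. rewrite HG00 in HC.
    set (phi := fun x => - Gu (Rmax x 0)).
    assert (Hphic : continuity phi).
    { intro x. apply continuous_pt. apply cont_eps. intros eps Heps.
      destruct (Hlip (Rabs x + 1) ltac:(assert (0 <= Rabs x) by apply Rabs_pos; lra)) as [K [HK HKl]].
      exists (Rmin 1 (eps / (K + 1))). split. apply Rmin_pos. lra. apply Rdiv_lt_0_compat; lra.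
      intros y Hy0. unfold phi.
      assert (H1 := Rmin_l 1 (eps / (K + 1))). assert (H2 := Rmin_r 1 (eps / (K + 1))).
      assert (Hm : Rabs (Rmax y 0 - Rmax x 0) <= Rabs (y - x)) by (unfold Rmax; destruct (Rle_dec y 0), (Rle_dec x 0); split_Rabs; lra).
      replace (- Gu (Rmax y 0) - - Gu (Rmax x 0)) with (- (Gu (Rmax y 0) - Gu (Rmax x 0))) by ring.
      rewrite Rabs_Ropp.
      assert (Hyy : 0 <= Rmax y 0 <= Rabs x + 1) by (unfold Rmax; destruct (Rle_dec y 0), (Rle_dec x 0); split_Rabs; lra).
      assert (Hxx : 0 <= Rmax x 0 <= Rabs x + 1) by (unfold Rmax; destruct (Rle_dec x 0); split_Rabs; lra).
      apply Rle_lt_trans with (K * Rabs (Rmax y 0 - Rmax x 0)). apply HKl; auto.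
      apply Rle_lt_trans with (K * (eps / (K + 1))).
      apply Rmult_le_compat_l; lra.
      apply Rlt_le_trans with ((K + 1) * (eps / (K + 1))).
      apply Rmult_lt_compat_r. apply Rdiv_lt_0_compat; lra. lra. right; field; lra. }
    set (B := C / (q * beta) + 1).
    assert (HB : 0 < B) by (unfold B; assert (0 < C / (q * beta)) by (apply Rdiv_lt_0_compat; lra); lra).
    assert (HGuB : Gu B < 0).
    { assert (Gu B <= C - q * beta * B) by (apply Hlim; lra).
      replace (C - q * beta * B) with (- (q * beta)) in H by (unfold B; field; lra). lra. }
    destruct (IVT phi 0 B Hphic HB) as [z [Hz Ephi]].
    { unfold phi. rewrite Rmax_left by lra. lra. }
    { unfold phi. rewrite Rmax_left by lra. lra. }
    unfold phi in Ephi. rewrite Rmax_left in Ephi by lra.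
    assert (Hz0 : z <> 0) by (intro; subst; lra).
    exists z. split. split; lra.
    intros b' Hb' E'. destruct (Rtotal_order b' z) as [h|[h|h]]; auto.
    - assert (Gu z < Gu b') by (apply Hdec; lra). lra.
    - assert (Gu b' < Gu z) by (apply Hdec; lra). lra. }
  split.
  { intros b Hb. destruct (Hst b Hb) as [m [Hm [E [Hmin _]]]]. rewrite E.
    split. exists m. split; [auto|]. simpl. apply HG; auto.
    intros x Hx. simpl. rewrite HG by auto. destruct (Req_dec x m). subst; lra. left; apply Hmin; auto. }
  split. exact Hcont.
  split. exact Hdec.
  split.
  { intro M. exists (Rmax 0 ((C - M) / (q * beta)) + 1). intros b Hb.
    assert (H1 := Rmax_l 0 ((C - M) / (q * beta))). assert (H2 := Rmax_r 0 ((C - M) / (q * beta))).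
    assert (Gu b <= C - q * beta * b) by (apply Hlim; lra).
    assert (q * beta * ((C - M) / (q * beta)) < q * beta * b) by (apply Rmult_lt_compat_l; lra).
    replace (q * beta * ((C - M) / (q * beta))) with (C - M) in H0 by (field; lra). lra. }
  assert (Hzero : forall b m a', 0 <= m < b -> 0 < a' < b -> 1 - beta * Zt q W (b - m) = 0 ->
     g a' b = 0 -> a' = m).
  { intros b m a' Hm Ha' Hk Hg. unfold g, gam in Hg. rewrite Zq_eq in Hg by (auto; lra).
    assert (E1 : 1 - beta * Zt q W (b - a') = 0).
    { replace (1 - beta * Zt q W (b - a')) with (beta * (/ beta - Zt q W (b - a'))) by (field; lra).
      rewrite Hg. ring. }
    destruct (Rtotal_order a' m) as [h|[h|h]]; auto.
    - assert (1 - beta * Zt q W (b - a') < 1 - beta * Zt q W (b - m)) by (apply (k_smono q delta beta WW W); auto; lra). lra.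
    - assert (1 - beta * Zt q W (b - m) < 1 - beta * Zt q W (b - a')) by (apply (k_smono q delta beta WW W); auto; lra). lra. }
  split.
  { intros b Hb. destruct (Hst b ltac:(lra)) as [m [Hm [E [Hmin Hc]]]].
    exists m. split. split; auto. rewrite HG, E by auto. auto.
    split.
    { intros a' Ha' E'. rewrite HG, E in E' by auto. destruct (Req_dec a' m); auto.
      assert (F m b < F a' b) by (apply Hmin; auto). lra. }
    destruct Hc as [[Hm0 _]|[Hm1 Hk]]. left; auto.
    right. split; auto. split.
    - unfold g, gam. rewrite Zq_eq by (auto; lra).
      replace (/ beta - Zt q W (b - m)) with (/ beta * (1 - beta * Zt q W (b - m))) by (field; lra).
      rewrite Hk. ring.
    - intros a' Ha' Hg'. apply (Hzero b m a'); auto; lra. }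
  split. exact HG00.
  split. exact Hbstar.
  assert (HCdef : C = delta - q * rho - beta * dpsiX) by reflexivity.
  unfold a_s, b_s, astar, bstar.
  destruct (Rle_dec (Gam q delta beta rho dpsiX WW W 0 0) 0) as [Hn|Hp].
  - change (Gam q delta beta rho dpsiX WW W 0 0) with (G 0 0) in Hn. rewrite HG00 in Hn.
    split. { left. split; [reflexivity|]. split; [reflexivity|]. lra. }
    split. { intros [[_ [_ H1]] [_ [_ [_ [_ H2]]]]]. lra. }
    split. { intros [[_ [_ H1]] [_ [_ [_ [_ H2]]]]]. lra. }
    intros [[H1 _] [H2 _]]. lra.
  - change (Gam q delta beta rho dpsiX WW W 0 0) with (G 0 0) in Hp.
    assert (HC : 0 < C) by (rewrite <- HG00; lra).
    destruct (Hbstar ltac:(lra)) as [bz [[Hbz Ebz] _]].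
    set (bs := epsilon (inhabits 0) (fun b => 0 < b /\ Gunder q delta beta rho dpsiX WW W b = 0)).
    assert (Hbs : 0 < bs /\ Gu bs = 0).
    { apply (epsilon_spec (inhabits 0) (fun b => 0 < b /\ Gunder q delta beta rho dpsiX WW W b = 0)).
      exists bz; auto. }
    destruct Hbs as [Hbs0 Hbs1].
    destruct (Hst bs ltac:(lra)) as [m [Hm [E [Hmin Hc]]]].
    assert (Has : aof q delta beta rho dpsiX WW W bs = m).
    { unfold aof.
      assert (Hs := epsilon_spec (inhabits 0) (fun a => 0 <= a <= bs /\
          Gam q delta beta rho dpsiX WW W a bs = Gunder q delta beta rho dpsiX WW W bs)
          (ex_intro _ m (conj Hm (eq_trans (HG m bs Hm) (eq_sym E))))).
      assert (Hu : forall a, 0 <= a <= bs -> G a bs = Gu bs -> a = m).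
      { intros a Ha Ea. rewrite HG, E in Ea by auto.
        destruct (Req_dec a m); auto. assert (F m bs < F a bs) by (apply Hmin; auto). lra. }
      apply Hu; apply Hs. }
    rewrite Has.
    assert (HGm : G m bs = 0) by (rewrite HG, <- E by auto; auto).
    destruct Hc as [[Hm0 Hk]|[Hm1 Hk]].
    + subst m. split. right. left. split; auto. split; auto. split. auto. split.
      * rewrite Zq_eq by (auto; lra).
        replace (/ beta - Zt q W bs) with (/ beta * (1 - beta * Zt q W bs)) by (field; lra).
        apply Rle_ge. apply Rmult_le_pos; auto. left; apply Rinv_0_lt_compat; lra.
      * fold C. lra.
      * split. fold C. intros [[_ [_ H1]] _]. lra.
        split. fold C. intros [[_ [_ H1]] _]. lra.
        intros [[H1 _] [H2 _]]. lra.
    + split. right. right. split. lra. split. lra. split. auto. split.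
      * unfold g, gam. rewrite Zq_eq by (auto; lra).
        replace (/ beta - Zt q W (bs - m)) with (/ beta * (1 - beta * Zt q W (bs - m))) by (field; lra).
        rewrite Hk. ring.
      * fold C. lra.
      * split. fold C. intros [[_ [_ H1]] _]. lra.
        split. fold C. intros [[_ [_ H1]] _]. lra.
        intros [[H1 _] [H2 _]]. lra.
Qed.
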